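(* Let $\mathfrak a_{1.3}$ be the Lie algebra of vector fields on $\mathbb R^3_{z_1,z_2,w}$ spanned by \[ P^1=\partial_{z_1},\ D^1=z_1\partial_{z_1}-w\partial_w,\ K=z_1^2\partial_{z_1}+z_1z_2\partial_{z_2}+\big(z_1w+\tfrac16z_2^{3}\big)\partial_w,\ D^2=z_2\partial_{z_2}+3w\partial_w, \] \[ P^2=\partial_{z_2},\ H=z_1\partial_{z_2}+\tfrac12z_2^{2}\partial_w,\ R(\alpha)=\alpha(z_1)z_2\partial_w,\ Z(\sigma)=\sigma(z_1)\partial_w \] ($\alpha,\sigma$ arbitrary smooth functions of $z_1$). Then any one-dimensional subalgebra of $\mathfrak a_{1.3}$ that is appropriate for Lie reduction of the equation $w_{122}+w_{22}w_{222}=0$ is $G_{1.3}$-equivalent to a subalgebra contained in the span $\mathfrak u:=\langle P^1,D^1,K,D^2,P^2,H\rangle$ or in the span $\langle P^2,R(\alpha)\rangle$ for some smooth function $\alpha$ of $z_1$.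
   Context: A one-dimensional subalgebra $\langle Q\rangle$ is appropriate for Lie reduction if the projection of $Q$ to the space of independent variables $(z_1,z_2)$ is not identically zero. $G_{1.3}$ is the point-symmetry pseudogroup of $w_{122}+w_{22}w_{222}=0$, consisting of the transformations $\tilde z_1=\frac{c_1z_1+c_2}{c_3z_1+c_4}$, $\tilde z_2=\frac{z_2+c_5z_1+c_6}{c_3z_1+c_4}$, $\tilde w=\frac{w}{\Delta(c_3z_1+c_4)}-\frac{c_3}{\Delta(c_3z_1+c_4)^2}\frac{z_2^3}6-\frac{c_3c_6-c_4c_5}{\Delta(c_3z_1+c_4)^2}\frac{z_2^2}2+W^1(z_1)z_2+W^0(z_1)$, with constants $c_i$, $\Delta:=c_1c_4-c_2c_3\ne0$, and smooth functions $W^0,W^1$. Two subalgebras are $G_{1.3}$-equivalent if one is the pushforward of the other by an element of $G_{1.3}$. *)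

(* Defs.v *)
From Stdlib Require Import Reals.
From Coquelicot Require Import Coquelicot.
Open Scope R_scope.

Definition smooth_at (f : R -> R) (x : R) : Prop := forall n : nat, ex_derive_n f n x.
Definition smooth (f : R -> R) : Prop := forall x, smooth_at f x.

(* Vector fields on R^3_{z1,z2,w}, given by their components
   (coefficients of d_z1, d_z2, d_w). *)
Definition vf := R -> R -> R -> (R * R * R).

Definition vadd (X Y : vf) : vf := fun z1 z2 w =>
  let '(a1, a2, a3) := X z1 z2 w in let '(b1, b2, b3) := Y z1 z2 w in
  (a1 + b1, a2 + b2, a3 + b3).
Definition vscal (c : R) (X : vf) : vf := fun z1 z2 w =>
  let '(a1, a2, a3) := X z1 z2 w in (c * a1, c * a2, c * a3).

Definition P1 : vf := fun z1 z2 w => (1, 0, 0).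
Definition D1 : vf := fun z1 z2 w => (z1, 0, - w).
Definition K  : vf := fun z1 z2 w => (z1 ^ 2, z1 * z2, z1 * w + / 6 * z2 ^ 3).
Definition D2 : vf := fun z1 z2 w => (0, z2, 3 * w).
Definition P2 : vf := fun z1 z2 w => (0, 1, 0).
Definition H  : vf := fun z1 z2 w => (0, z1, / 2 * z2 ^ 2).
Definition Rf (alpha : R -> R) : vf := fun z1 z2 w => (0, 0, alpha z1 * z2).
Definition Zf (sigma : R -> R) : vf := fun z1 z2 w => (0, 0, sigma z1).

Definition u_comb (a1 b1 k b2 a2 h : R) : vf :=
  vadd (vscal a1 P1) (vadd (vscal b1 D1) (vadd (vscal k K)
  (vadd (vscal b2 D2) (vadd (vscal a2 P2) (vscal h H))))).

Definition in_a13 (Q : vf) : Prop :=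
  exists (a1 b1 k b2 a2 h : R) (alpha sigma : R -> R),
    smooth alpha /\ smooth sigma /\
    forall z1 z2 w, Q z1 z2 w = vadd (u_comb a1 b1 k b2 a2 h) (vadd (Rf alpha) (Zf sigma)) z1 z2 w.

(* <Q> is appropriate for Lie reduction: the projection of Q to the
   (z1,z2)-space is not identically zero. *)
Definition appropriate (Q : vf) : Prop :=
  exists z1 z2 w, fst (fst (Q z1 z2 w)) <> 0 \/ snd (fst (Q z1 z2 w)) <> 0.

Definition ptrans := R -> R -> R -> (R * R * R).

Definition G13 (c1 c2 c3 c4 c5 c6 : R) (W0 W1 : R -> R) : ptrans :=
  fun z1 z2 w =>
    let den := c3 * z1 + c4 in
    let Delta := c1 * c4 - c2 * c3 in
    ( (c1 * z1 + c2) / den,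
      (z2 + c5 * z1 + c6) / den,
      w / (Delta * den)
      - c3 / (Delta * den ^ 2) * (z2 ^ 3 / 6)
      - (c3 * c6 - c4 * c5) / (Delta * den ^ 2) * (z2 ^ 2 / 2)
      + W1 z1 * z2 + W0 z1 ).

Definition dirder (F : R -> R -> R -> R) (z1 z2 w : R) (v : R * R * R) : R :=
  let '(v1, v2, v3) := v in
  Derive (fun e => F (z1 + e * v1) (z2 + e * v2) (w + e * v3)) 0.

(* (Phi_* Q)(Phi(p)) = dPhi(p) Q(p), written as a function of the source point p *)
Definition push_at (Phi : ptrans) (Q : vf) (z1 z2 w : R) : R * R * R :=
  ( dirder (fun a b c => fst (fst (Phi a b c))) z1 z2 w (Q z1 z2 w),
    dirder (fun a b c => snd (fst (Phi a b c))) z1 z2 w (Q z1 z2 w),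
    dirder (fun a b c => snd (Phi a b c)) z1 z2 w (Q z1 z2 w) ).

(* Main.v *)
Require Import Defs.
From Stdlib Require Import Reals Lra Classical.
From Coquelicot Require Import Coquelicot.
Open Scope R_scope.

Lemma loc_I lo hi x : lo < x < hi -> locally x (fun z => lo < z < hi).
Proof.
  intros [H1 H2].
  assert (He: 0 < Rmin (x - lo) (hi - x)) by (apply Rmin_glb_lt; lra).
  exists (mkposreal _ He). intros z Hz.
  unfold ball in Hz; simpl in Hz; unfold AbsRing_ball, abs, minus, plus, opp in Hz; simpl in Hz.
  apply Rabs_def2 in Hz. pose proof (Rmin_l (x - lo) (hi - x)). pose proof (Rmin_r (x - lo) (hi - x)). lra.
Qed.

Inductive Alg (lo hi : R) : (R -> R) -> Prop :=
| A_const c : Alg lo hi (fun _ => c)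
| A_id : Alg lo hi (fun x => x)
| A_plus f g : Alg lo hi f -> Alg lo hi g -> Alg lo hi (fun x => f x + g x)
| A_opp f : Alg lo hi f -> Alg lo hi (fun x => - f x)
| A_mult f g : Alg lo hi f -> Alg lo hi g -> Alg lo hi (fun x => f x * g x)
| A_pow f n : Alg lo hi f -> Alg lo hi (fun x => f x ^ n)
| A_inv f : Alg lo hi f -> (forall x, lo < x < hi -> f x <> 0) -> Alg lo hi (fun x => / f x)
| A_exp f : Alg lo hi f -> Alg lo hi (fun x => exp (f x))
| A_comp F f : smooth F -> Alg lo hi f -> Alg lo hi (fun x => F (f x))
| A_RInt f x0 : Alg lo hi f -> lo < x0 < hi -> Alg lo hi (fun x => RInt f x0 x)
| A_ext f g : Alg lo hi f -> (forall x, lo < x < hi -> f x = g x) -> Alg lo hi g.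

Lemma exdn_S (f : R -> R) m x :
  ex_derive_n f (S (S m)) x <-> ex_derive_n (Derive f) (S m) x.
Proof.
  simpl. assert (E : forall t, Derive_n (Derive f) m t = Derive (Derive_n f m) t).
  { intro t. change (Derive (Derive_n f m) t) with (Derive_n f (S m) t).
    rewrite <- Nat.add_1_r, <- (Derive_n_comp f m 1 t). apply Derive_n_ext. intro u.
    change (Derive f u = Derive (Derive_n f 0) u). apply Derive_ext. intro; reflexivity. }
  split; apply ex_derive_ext; intro t; rewrite E; reflexivity.
Qed.

Lemma smooth_Derive F : smooth F -> smooth (Derive F).
Proof.
  intros HF y n. destruct n as [|m]. exact I. apply (proj1 (exdn_S F m y)). apply HF.
Qed.

Lemma smooth_is_derive F y : smooth F -> is_derive F y (Derive F y).
Proof. intros HF. apply Derive_correct. exact (HF y 1%nat). Qed.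

Lemma RInt_is_derive lo hi (f : R -> R) x0 x :
  (forall z, lo < z < hi -> continuous f z) -> lo < x0 < hi -> lo < x < hi ->
  is_derive (fun y => RInt f x0 y) x (f x).
Proof.
  intros Hc H0 Hx. apply is_derive_RInt with (a := x0).
  - apply filter_imp with (2 := loc_I lo hi x Hx). intros b Hb.
    apply RInt_correct. apply ex_RInt_continuous. intros z [Hz1 Hz2]. apply Hc.
    split.
    + eapply Rlt_le_trans with (2 := Hz1). apply Rmin_case; lra.
    + eapply Rle_lt_trans with (1 := Hz2). apply Rmax_case; lra.
  - apply Hc; auto.
Qed.

Lemma scalR (a b : R) : scal a b = a * b.
Proof. reflexivity. Qed.

Lemma isd_plus (f g : R -> R) x a b : is_derive f x a -> is_derive g x b -> is_derive (fun y => f y + g y) x (a + b).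
Proof. intros. apply (is_derive_plus f g x a b); auto. Qed.
Lemma isd_opp (f : R -> R) x a : is_derive f x a -> is_derive (fun y => - f y) x (- a).
Proof. intros. apply (is_derive_opp f x a); auto. Qed.
Lemma isd_mult (f g : R -> R) x a b : is_derive f x a -> is_derive g x b -> is_derive (fun y => f y * g y) x (a * g x + f x * b).
Proof. intros. apply (is_derive_mult f g x a b); auto. intros; apply Rmult_comm. Qed.

Lemma isd_val (f : R -> R) x l l' : is_derive f x l -> l = l' -> is_derive f x l'.
Proof. intros H ->; exact H. Qed.

Lemma Alg_der lo hi f : Alg lo hi f ->
  exists g, Alg lo hi g /\ forall x, lo < x < hi -> is_derive f x (g x).
Proof.
  induction 1.
  - exists (fun _ => 0). split. constructor. intros. apply (is_derive_const (K:=R_AbsRing) c x).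
  - exists (fun _ => 1). split. constructor. intros. apply (is_derive_id (K:=R_AbsRing) x).
  - destruct IHAlg1 as [f' [A1 D1]]. destruct IHAlg2 as [g' [A2 D2]].
    exists (fun x => f' x + g' x). split. apply A_plus; auto.
    intros. apply isd_plus; auto.
  - destruct IHAlg as [f' [A1 D1]].
    exists (fun x => - f' x). split. apply A_opp; auto.
    intros. apply isd_opp; auto.
  - destruct IHAlg1 as [f' [A1 D1]]. destruct IHAlg2 as [g' [A2 D2]].
    exists (fun x => f' x * g x + f x * g' x). split.
    { apply A_plus; apply A_mult; auto. }
    intros. apply isd_mult; auto.
  - destruct IHAlg as [f' [A1 D1]].
    exists (fun x => INR n * f' x * (f x ^ (pred n))). split.
    { apply A_mult; auto. apply A_mult; [apply A_const| auto]. apply A_pow; auto. }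
    intros. apply is_derive_pow; auto.
  - destruct IHAlg as [f' [A1 D1]].
    exists (fun x => - f' x * ((/ f x) * (/ f x))). split.
    { apply A_mult. apply A_opp; auto. apply A_mult; apply A_inv; auto. }
    intros. eapply isd_val. apply is_derive_inv. apply D1; auto. apply H0; auto. specialize (H0 x H1). assert (E : forall a b : R, b <> 0 -> - a / b ^ 2 = - a * (/ b * / b)) by (intros; field; auto). apply E; auto.
  - destruct IHAlg as [f' [A1 D1]].
    exists (fun x => f' x * exp (f x)). split.
    { apply A_mult; auto. apply A_exp; auto. }
    intros. rewrite <- scalR. apply (is_derive_comp exp f x). apply is_derive_exp. auto.
  - destruct IHAlg as [f' [A1 D1]].
    exists (fun x => f' x * Derive F (f x)). split.
    { apply A_mult; auto. apply A_comp; auto. apply smooth_Derive; auto. }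
    intros. rewrite <- scalR. apply (is_derive_comp F f x). apply smooth_is_derive; auto. auto.
  - destruct IHAlg as [f' [A1 D1]].
    exists f. split. auto.
    intros. apply RInt_is_derive with lo hi; auto.
    intros z Hz. apply (ex_derive_continuous (K:=R_AbsRing) (V:=R_NormedModule) f z). eexists. apply D1; auto.
  - destruct IHAlg as [f' [A1 D1]].
    exists f'. split. auto.
    intros. apply is_derive_ext_loc with f; auto.
    apply filter_imp with (2 := loc_I lo hi x H1). auto.
Qed.

Lemma Alg_smooth lo hi f x : Alg lo hi f -> lo < x < hi -> smooth_at f x.
Proof.
  intros A Hx n. revert f A x Hx. induction n as [|n IH]; intros f A x Hx.
  - exact I.
  - destruct (Alg_der lo hi f A) as [g [Ag Dg]].
    destruct n as [|m].
    + simpl. exists (g x). apply Dg; auto.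
    + apply (proj2 (exdn_S f m x)). apply ex_derive_n_ext_loc with g.
      * apply filter_imp with (2 := loc_I lo hi x Hx). intros t Ht.
        symmetry. apply is_derive_unique. apply Dg; auto.
      * apply IH; auto.
Qed.

Lemma Alg_derive lo hi f x : Alg lo hi f -> lo < x < hi -> ex_derive f x.
Proof. intros A Hx. exact (Alg_smooth lo hi f x A Hx 1%nat). Qed.

Ltac sidec := repeat split; rewrite ?Rmult_0_l, ?Rplus_0_r; auto;
  repeat (apply Rmult_integral_contrapositive; split); auto; try apply pow_nonzero; auto.

Lemma dd1 c1 c2 c3 c4 c5 c6 W0 W1 z1 z2 w v1 v2 v3 : c3*z1+c4 <> 0 ->
 dirder (fun a b c => fst (fst (G13 c1 c2 c3 c4 c5 c6 W0 W1 a b c))) z1 z2 w (v1,v2,v3)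
 = v1 * (c1*c4 - c2*c3) / (c3*z1+c4)^2.
Proof.
  intros Hd. unfold dirder. cbv beta zeta iota delta [G13 fst snd].
  apply is_derive_unique. auto_derive.
  - sidec.
  - rewrite ?Rmult_0_l, ?Rplus_0_r. field. auto.
Qed.

Lemma dd2 c1 c2 c3 c4 c5 c6 W0 W1 z1 z2 w v1 v2 v3 : c3*z1+c4 <> 0 ->
 dirder (fun a b c => snd (fst (G13 c1 c2 c3 c4 c5 c6 W0 W1 a b c))) z1 z2 w (v1,v2,v3)
 = (v2 + c5 * v1) / (c3*z1+c4) - (z2 + c5*z1 + c6) * c3 * v1 / (c3*z1+c4)^2.
Proof.
  intros Hd. unfold dirder. cbv beta zeta iota delta [G13 fst snd].
  apply is_derive_unique. auto_derive.
  - sidec.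
  - rewrite ?Rmult_0_l, ?Rplus_0_r. field. auto.
Qed.

Lemma dd3 c1 c2 c3 c4 c5 c6 (W0 W1 : R -> R) z1 z2 w v1 v2 v3 : c3*z1+c4 <> 0 -> c1*c4-c2*c3 <> 0 ->
 ex_derive W0 z1 -> ex_derive W1 z1 ->
 dirder (fun a b c => snd (G13 c1 c2 c3 c4 c5 c6 W0 W1 a b c)) z1 z2 w (v1,v2,v3)
 = v3 / ((c1*c4-c2*c3) * (c3*z1+c4))
   + v2 * ( - c3 / ((c1*c4-c2*c3) * (c3*z1+c4)^2) * (z2^2/2)
            - (c3 * c6 - c4 * c5) / ((c1*c4-c2*c3) * (c3*z1+c4)^2) * z2 + W1 z1)
   + v1 * ( - w * c3 / ((c1*c4-c2*c3) * (c3*z1+c4)^2)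
            + 2 * c3 * c3 / ((c1*c4-c2*c3) * (c3*z1+c4)^3) * (z2^3/6)
            + 2 * c3 * (c3 * c6 - c4 * c5) / ((c1*c4-c2*c3) * (c3*z1+c4)^3) * (z2^2/2)
            + Derive W1 z1 * z2 + Derive W0 z1).
Proof.
  intros Hd HD H0 H1. unfold dirder. cbv beta zeta iota delta [G13 fst snd].
  apply is_derive_unique. auto_derive.
  - sidec.
  - rewrite ?Rmult_0_l, ?Rplus_0_r. change (Derive (fun x => W1 x) z1) with (Derive W1 z1). change (Derive (fun x => W0 x) z1) with (Derive W0 z1). field. auto.
Qed.

Lemma Alg_cont lo hi f x : Alg lo hi f -> lo < x < hi -> continuous (f : R -> R) x.
Proof.
  intros A Hx. apply (ex_derive_continuous (K:=R_AbsRing) (V:=R_NormedModule) f x).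
  eapply Alg_derive; eauto.
Qed.

Lemma isd_exp f x d : is_derive f x d -> is_derive (fun y => exp (f y)) x (d * exp (f x)).
Proof. intros. rewrite <- scalR. apply (is_derive_comp exp f x). apply is_derive_exp. auto. Qed.

Lemma ode lo hi p q x0 : Alg lo hi p -> Alg lo hi q -> lo < x0 < hi ->
  exists y, Alg lo hi y /\ forall x, lo < x < hi -> is_derive y x (p x * y x + q x).
Proof.
  intros Ap Aq H0.
  set (g := fun s => q s * exp (- RInt p x0 s)).
  assert (Ag : Alg lo hi g).
  { apply (A_mult lo hi q (fun s => exp (- RInt p x0 s))); auto.
    apply (A_exp lo hi (fun s => - RInt p x0 s)).
    apply (A_opp lo hi (fun s => RInt p x0 s)). apply A_RInt; auto. }
  exists (fun x => exp (RInt p x0 x) * RInt g x0 x). split.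
  - apply (A_mult lo hi (fun x => exp (RInt p x0 x)) (fun x => RInt g x0 x)).
    apply (A_exp lo hi (fun s => RInt p x0 s)). apply A_RInt; auto.
    apply A_RInt; auto.
  - intros x Hx. eapply isd_val. apply isd_mult.
    + apply (isd_exp (fun s => RInt p x0 s)). apply RInt_is_derive with lo hi; auto.
      intros; apply Alg_cont with lo hi; auto.
    + apply RInt_is_derive with lo hi; auto.
      intros; apply Alg_cont with lo hi; auto.
    + unfold g. rewrite exp_Ropp. match goal with |- ?a = ?b => change (@eq R a b) end. field. apply Rgt_not_eq, exp_pos.
Qed.

Lemma nz_interval (f : R -> R) z0 : continuous f z0 -> f z0 <> 0 ->
  exists lo hi, lo < z0 < hi /\ forall z, lo < z < hi -> f z <> 0.
Proof.
  intros Hc Hn.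
  assert (Hl : locally (f z0) (fun y => y <> 0)).
  { assert (He : 0 < Rabs (f z0)) by (apply Rabs_pos_lt; auto).
    exists (mkposreal _ He). intros y Hy.
    unfold ball in Hy; simpl in Hy; unfold AbsRing_ball, abs, minus, plus, opp in Hy; simpl in Hy.
    intro E; subst y. rewrite Rplus_0_l, Rabs_Ropp in Hy. lra. }
  specialize (Hc _ Hl). destruct Hc as [eps He].
  exists (z0 - eps), (z0 + eps). split.
  - destruct eps; simpl; lra.
  - intros z Hz. apply (He z).
    unfold ball; simpl; unfold AbsRing_ball, abs, minus, plus, opp; simpl.
    apply Rabs_def1; lra.
Qed.

Lemma cont_der (f : R -> R) x : ex_derive f x -> continuous f x.
Proof. apply (ex_derive_continuous (K:=R_AbsRing) (V:=R_NormedModule) f x). Qed.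

Ltac alg := first [ apply A_const |
  lazymatch goal with
  | |- Alg ?lo ?hi (fun x => x) => apply (A_id lo hi)
  | |- Alg ?lo ?hi (fun x => @?f x + @?g x) => apply (A_plus lo hi f g); alg
  | |- Alg ?lo ?hi (fun x => @?f x - @?g x) =>
      apply (A_plus lo hi f (fun x => - g x)); [alg | apply (A_opp lo hi g); alg]
  | |- Alg ?lo ?hi (fun x => - @?f x) => apply (A_opp lo hi f); alg
  | |- Alg ?lo ?hi (fun x => @?f x * @?g x) => apply (A_mult lo hi f g); alg
  | |- Alg ?lo ?hi (fun x => @?f x / @?g x) =>
      apply (A_mult lo hi f (fun x => / g x)); [alg | apply (A_inv lo hi g); [alg|]]
  | |- Alg ?lo ?hi (fun x => / @?f x) => apply (A_inv lo hi f); [alg|]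
  | |- Alg ?lo ?hi (fun x => @?f x ^ ?n) => apply (A_pow lo hi f n); alg
  | |- Alg ?lo ?hi (fun x => exp (@?f x)) => apply (A_exp lo hi f); alg
  | |- Alg ?lo ?hi (fun x => ?F x) => first [assumption | apply (A_comp lo hi F (fun x => x)); [assumption | apply A_id]]
  | |- Alg ?lo ?hi (fun x => ?F (@?f x)) => apply (A_comp lo hi F f); [assumption | alg]
  | |- Alg ?lo ?hi ?F => first [assumption | apply (A_comp lo hi F (fun x => x)); [assumption | apply A_id]]
  end ].


Lemma Q_form (Q : vf) a1 b1 k b2 a2 h alpha sigma :
  (forall z1 z2 w, Q z1 z2 w = vadd (u_comb a1 b1 k b2 a2 h) (vadd (Rf alpha) (Zf sigma)) z1 z2 w) ->
  forall z1 z2 w, Q z1 z2 w =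
   (a1 + b1*z1 + k*z1^2, k*z1*z2 + b2*z2 + a2 + h*z1,
    (-b1 + k*z1 + 3*b2)*w + k*z2^3/6 + h*z2^2/2 + alpha z1 * z2 + sigma z1).
Proof.
  intros HQ z1 z2 w. rewrite HQ.
  unfold vadd, u_comb, vadd, vscal, P1, D1, K, D2, P2, H, Rf, Zf.
  cbv beta iota zeta.
  apply (f_equal2 pair); [apply (f_equal2 pair)|]; field.
Qed.

Lemma push_form c1 c2 c3 c4 c5 c6 (W0 W1 : R -> R) (Q : vf) z1 z2 w v1 v2 v3 :
  c3*z1+c4 <> 0 -> c1*c4-c2*c3 <> 0 -> ex_derive W0 z1 -> ex_derive W1 z1 ->
  Q z1 z2 w = (v1, v2, v3) ->
  push_at (G13 c1 c2 c3 c4 c5 c6 W0 W1) Q z1 z2 w =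
  ( v1 * (c1*c4 - c2*c3) / (c3*z1+c4)^2,
    (v2 + c5 * v1) / (c3*z1+c4) - (z2 + c5*z1 + c6) * c3 * v1 / (c3*z1+c4)^2,
    v3 / ((c1*c4-c2*c3) * (c3*z1+c4))
   + v2 * ( - c3 / ((c1*c4-c2*c3) * (c3*z1+c4)^2) * (z2^2/2)
            - (c3 * c6 - c4 * c5) / ((c1*c4-c2*c3) * (c3*z1+c4)^2) * z2 + W1 z1)
   + v1 * ( - w * c3 / ((c1*c4-c2*c3) * (c3*z1+c4)^2)
            + 2 * c3 * c3 / ((c1*c4-c2*c3) * (c3*z1+c4)^3) * (z2^3/6)
            + 2 * c3 * (c3 * c6 - c4 * c5) / ((c1*c4-c2*c3) * (c3*z1+c4)^3) * (z2^2/2)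
            + Derive W1 z1 * z2 + Derive W0 z1)).
Proof.
  intros Hd HD H0 H1 HQ. unfold push_at. rewrite HQ.
  rewrite dd1, dd2, dd3; auto.
Qed.

Theorem lemma13 (Q : vf) :
  in_a13 Q -> appropriate Q ->
  exists (c1 c2 c3 c4 c5 c6 : R) (W0 W1 : R -> R) (lo hi : R),
    c1 * c4 - c2 * c3 <> 0 /\ lo < hi /\
    (forall z1, lo < z1 < hi ->
       c3 * z1 + c4 <> 0 /\ smooth_at W0 z1 /\ smooth_at W1 z1) /\
    let Phi := G13 c1 c2 c3 c4 c5 c6 W0 W1 in
    ( (exists a1 b1 k b2 a2 h : R,
         forall z1 z2 w, lo < z1 < hi ->
           let '(t1, t2, t3) := Phi z1 z2 w in
           push_at Phi Q z1 z2 w = u_comb a1 b1 k b2 a2 h t1 t2 t3)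
      \/
      (exists (lam mu : R) (alpha : R -> R),
         (forall z1 z2 w, lo < z1 < hi -> smooth_at alpha (fst (fst (Phi z1 z2 w)))) /\
         forall z1 z2 w, lo < z1 < hi ->
           let '(t1, t2, t3) := Phi z1 z2 w in
           push_at Phi Q z1 z2 w = vadd (vscal lam P2) (vscal mu (Rf alpha)) t1 t2 t3) ).
Proof.
  intros [a1 [b1 [k [b2 [a2 [h [alpha [sigma [Sa [Ss HQ]]]]]]]]]] Happ.
  pose proof (Q_form Q a1 b1 k b2 a2 h alpha sigma HQ) as HF. clear HQ.
  destruct (classic (exists z0, a1 + b1*z0 + k*z0^2 <> 0)) as [[z0 Hz0] | Hno].
  -
    destruct (nz_interval (fun z => a1 + b1*z + k*z^2) z0) as [lo [hi [Hin Hnz]]]; auto.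
    { apply cont_der. auto_derive. auto. }
    destruct (ode lo hi (fun z => (2*b2 - b1) / (a1 + b1*z + k*z^2))
                        (fun z => - alpha z / (a1 + b1*z + k*z^2)) z0) as [y1 [Ay1 Dy1]];
      [alg; auto | alg; auto | auto |].
    destruct (ode lo hi (fun z => (-b1 + k*z + 3*b2) / (a1 + b1*z + k*z^2))
                        (fun z => - (sigma z + (a2 + h*z) * y1 z) / (a1 + b1*z + k*z^2)) z0) as [y0 [Ay0 Dy0]];
      [alg; auto | alg; auto | auto |].
    exists 1, 0, 0, 1, 0, 0, y0, y1, lo, hi.
    split; [lra|]. split; [lra|]. split.
    { intros z Hz. split; [lra|]. split; eapply Alg_smooth; eauto. }
    intro Phi. left. exists a1, b1, k, b2, a2, h. intros z1 z2 w Hz. unfold Phi.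
    rewrite (push_form 1 0 0 1 0 0 y0 y1 Q z1 z2 w _ _ _ ltac:(lra) ltac:(lra)
      (Alg_derive lo hi y0 z1 Ay0 Hz) (Alg_derive lo hi y1 z1 Ay1 Hz) (HF z1 z2 w)).
    rewrite (is_derive_unique _ _ _ (Dy1 z1 Hz)), (is_derive_unique _ _ _ (Dy0 z1 Hz)).
    unfold G13, u_comb, vadd, vscal, P1, D1, K, D2, P2, H, Rf, Zf.
    cbv beta iota zeta.
    specialize (Hnz z1 Hz).
    apply (f_equal2 pair); [apply (f_equal2 pair)|]; field; lra.
  - assert (Hx : forall z, a1 + b1*z + k*z^2 = 0).
    { intro z. apply NNPP. intro C. apply Hno. eauto. }
    pose proof (Hx 0) as X0; pose proof (Hx 1) as X1; pose proof (Hx (-1)) as X2.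
    assert (a1 = 0) by (simpl in *; lra). assert (b1 = 0) by (simpl in *; lra).
    assert (k = 0) by (simpl in *; lra). subst a1 b1 k. clear X0 X1 X2 Hno.
    destruct Happ as [z1 [z2 [w Hp]]]. rewrite HF in Hp. simpl in Hp.
    destruct Hp as [Hp|Hp]; [exfalso; apply Hp; ring |].
    destruct (Req_dec b2 0) as [Hb|Hb].
    +
      subst b2.
      assert (HD : a2*a2 - -h*h <> 0).
      { intro E. assert (a2 = 0) by nra. assert (h = 0) by nra. subst. apply Hp. ring. }
      destruct (nz_interval (fun z => h*z + a2) z1) as [lo [hi [Hin Hnz]]].
      { apply cont_der. auto_derive. auto. }
      { intro E. apply Hp. lra. }
      exists a2, (-h), h, a2, 0, 0, (fun _ => 0), (fun z => - sigma z / ((a2*a2 - -h*h) * (h*z+a2)^2)), lo, hi.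
      split; [exact HD|]. split; [lra|]. split.
      { intros z Hz. split; [apply Hnz; auto|]. split.
        - eapply Alg_smooth; [apply A_const | eauto].
        - eapply Alg_smooth; [| eauto]. alg.
          intros x Hx'. apply Rmult_integral_contrapositive; split; auto. apply pow_nonzero; auto. }
      intro Phi. right. exists 1, 1, (fun t => alpha ((h + t*a2)/(a2 - t*h)) / (a2*a2 - -h*h)).
      split.
      * intros z1' z2' w' Hz. unfold Phi, G13. cbv beta zeta. cbn [fst snd].
        pose proof (Hnz z1' Hz) as Hd.
        set (t1 := (a2 * z1' + - h) / (h * z1' + a2)).
        assert (Ht : a2 - t1 * h <> 0).
        { intro E. assert (E2 : (a2 - t1*h) * (h*z1' + a2) = a2*a2 - -h*h) by (unfold t1; field; auto).
          rewrite E, Rmult_0_l in E2. auto. }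
        destruct (nz_interval (fun t => a2 - t*h) t1) as [lo' [hi' [Hin' Hnz']]]; auto.
        { apply cont_der. auto_derive. auto. }
        eapply Alg_smooth; [| eauto]. alg; intros; auto.
      * intros z1' z2' w' Hz. unfold Phi.
        pose proof (Hnz z1' Hz) as Hd.
        rewrite (push_form a2 (-h) h a2 0 0 (fun _ => 0) (fun z => - sigma z / ((a2*a2 - -h*h) * (h*z+a2)^2))
           Q z1' z2' w' _ _ _ Hd HD
           (Alg_derive lo hi _ z1' (A_const lo hi 0) Hz)
           (Alg_derive lo hi (fun z => - sigma z / ((a2*a2 - -h*h) * (h*z+a2)^2)) z1' ltac:(alg; intros x Hx'; apply Rmult_integral_contrapositive; split; auto; apply pow_nonzero; auto) Hz)
           (HF z1' z2' w')).
        unfold G13, vadd, vscal, P2, Rf. cbv beta iota zeta.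
        assert (Em : (h + (a2 * z1' + - h) / (h * z1' + a2) * a2) / (a2 - (a2 * z1' + - h) / (h * z1' + a2) * h) = z1').
        { field. split; auto. intro E. apply HD. rewrite <- E. ring. }
        rewrite Em.
        apply (f_equal2 pair); [apply (f_equal2 pair)|]; field; auto.
    +
      exists 1, 0, 0, 1, 0, 0, (fun z => (sigma z + (a2 + h*z) * (alpha z / (2*b2))) / (3*b2)),
        (fun z => alpha z / (2*b2)), 0, 1.
      split; [lra|]. split; [lra|]. split.
      { intros z Hz. split; [lra|]. split; (eapply Alg_smooth; [| eauto]); alg; intros; lra. }
      intro Phi. left. exists 0, 0, 0, b2, a2, h. intros z1' z2' w' Hz. unfold Phi.
      rewrite (push_form 1 0 0 1 0 0 (fun z => (sigma z + (a2 + h*z) * (alpha z / (2*b2))) / (3*b2))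
        (fun z => alpha z / (2*b2)) Q z1' z2' w' _ _ _ ltac:(lra) ltac:(lra)
        (Alg_derive 0 1 (fun z => (sigma z + (a2 + h*z) * (alpha z / (2*b2))) / (3*b2)) z1' ltac:(alg; intros; lra) Hz)
        (Alg_derive 0 1 (fun z => alpha z / (2*b2)) z1' ltac:(alg; intros; lra) Hz) (HF z1' z2' w')).
      unfold G13, u_comb, vadd, vscal, P1, D1, K, D2, P2, H, Rf, Zf.
      cbv beta iota zeta.
      apply (f_equal2 pair); [apply (f_equal2 pair)|]; field; lra.
Qed.
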